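(* Let $p\neq q$ be primes and $N=N_p\times N_q$ with $N_p\cong C_p\times C_p$ and $N_q\cong C_q\times C_q$. Let $K_p\le T_p\le\mathrm{Aut}(N_p)$ and $K_q\le T_q\le\mathrm{Aut}(N_q)$ with $T_p,T_q$ abelian, and let $f_p\in\mathcal{E}(\mathrm{Aut}(N_p),K_p,N_p)$, $f_q\in\mathcal{E}(\mathrm{Aut}(N_q),K_q,N_q)$. Assume: (1) there is $n=n_pn_q\in N$ ($n_p\in N_p$, $n_q\in N_q$) with $f_p(n_p)=f_q(n_q)\neq0$; (2) $f_p$ vanishes outside $n_p^{T_p}$ and $f_q$ vanishes outside $n_q^{T_q}$; (3) there is an isomorphism $\alpha:T_p/K_p\to T_q/K_q$ such that $f_p(n_p^{a})=f_q(n_q^{b})$ for every $a\in T_p$ and every $b\in T_q$ with $bK_q=\alpha(a^{-1}K_p)$. Regard $T_p\times T_q\le\mathrm{Aut}(N)$, let $r_p:T_p\times T_q\to T_p$, $r_q:T_p\times T_q\to T_q$ be the projections, $\pi_p:T_p\to T_p/K_p$, $\pi_q:T_q\to T_q/K_q$ the quotient maps, $\Gamma=\{\sigma\in T_p\times T_q:\alpha\pi_pr_p(\sigma)=\pi_qr_q(\sigma)\}$ and $G=N\rtimes\Gamma$, acting on $N$ by conjugation. Define $\varepsilon:N\to\mathbb{Z}$ by $\varepsilon(x)=0$ if $x_q\notin n_q^G$ and $\varepsilon(x)=f_p(x_p^g)$ if $n_q=x_q^g$ with $g\in G$. Then $\varepsilon$ is well defined, $f_p\in\mathcal{E}(G,\mathrm{C}_G(n_q),N_p)$,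 $f_q\in\mathcal{E}(G,\mathrm{C}_G(n_p),N_q)$, and also $\varepsilon(x)=0$ if $x_p\notin n_p^G$ and $\varepsilon(x)=f_q(x_q^g)$ if $n_p=x_p^g$ with $g\in G$.
   Context: $x_p,x_q$ denote the $p$-part and $q$-part of $x\in N$; $x^S$ the orbit of $x$ under a group $S$; $\mathrm{C}_G(y)$ the centralizer. Definition of $\mathcal{E}(G,H,A)$ (for a group $G$ acting on a finite abelian group $A$ and $H\le G$): the set of functions $f:A\to\mathbb{Z}$ constant on $H$-orbits such that (I) $\sum_{X\in\mathrm{Cl}_H(A)}f(X)=1$, where $\mathrm{Cl}_H(A)$ is the set of $H$-orbits; (II) $f$ vanishes outside a single local $G$-class of $A$ ($a,b$ locally $G$-conjugate iff $a_r,b_r$ are $G$-conjugate for every prime $r$); (III) $\sum_{c\in C}|\mathrm{C}_H(c)|f(c)\ge0$ for every coset $C$ of a minimal cocyclic subgroup of $A$ (a subgroup $L$ with $A/L$ cyclic, minimal with this property); (IV) $f(a)\ge -h_A[\mathrm{C}_H(a_{\pi_0}):\mathrm{C}_H(a)]$ for all $a$, where $\pi_0$ is the set of primes $r$ dividing $|A|$ with $A_r$ cyclic and $h_A=\frac{\sum_{X\in\pi^-}\prod_{r\in\pi}(r^{k_r-\Delta_X(r)}-1)}{\prod_{r\in\pi}(r-1)r^{k_r-1}}$ with $\pi$ the primes dividing $|A|$, $\pi^-$ the odd-cardinality subsets of $\pi$, $\Delta_X$ the characteristic function of $X$, $k_r$ the rank of the socle of $A_r$; (V) $f(a)<0$ for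 some $a$. Here $\mathrm{C}_H(c)$ is the stabilizer of $c$ in $H$. *)

(* Defs.v *)
From HB Require Import structures.
From mathcomp Require Import all_boot all_order all_algebra all_fingroup all_solvable.
Set Implicit Arguments. Unset Strict Implicit. Unset Printing Implicit Defensive.
Import Order.TTheory GRing.Theory Num.Theory.

Local Open Scope group_scope.

Section EDef.
Variables (aT hT : finGroupType).
(* [act a h] : image of a under h (right action notation a^h). *)
Variable act : aT -> hT -> aT.

Definition orb (H : {set hT}) (a : aT) : {set aT} := [set act a h | h in H].
Definition stab (H : {set hT}) (a : aT) : {set hT} := [set h in H | act a h == a].
Definition locconj (G : {set hT}) (a b : aT) : Prop :=
  forall r : nat, prime r -> exists2 g, g \in G & act a.`_r g = b.`_r.

(* k_r : rank of the socle Omega_1(A_r) of the Sylow r-subgroup A_r = O_r(A) *)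
Definition krank (A : {set aT}) (r : nat) : nat := logn r #|'Ohm_1('O_r(A))|.
Definition pi0 (A : {set aT}) : nat_pred :=
  [pred r | (r \in primes #|A|) && cyclic 'O_r(A)].
(* h_A ; subsets of pi indexed by positions in the sequence pi = primes |A| *)
Definition hA (A : {set aT}) : rat :=
  let pi := primes #|A| in
  ((\sum_(X : {set 'I_(size pi)} | odd #|X|)
      \prod_(i < size pi)
         (((nth 0%N pi i)%:R : rat) ^+ (krank A (nth 0%N pi i) - (i \in X)) - 1))
   / \prod_(r <- pi) (((r%:R : rat) - 1) * (r%:R : rat) ^+ (krank A r - 1)))%R.

Definition isE (G H : {set hT}) (A : {group aT}) (f : aT -> int) : Prop :=
  (forall a h, a \in A -> h \in H -> f (act a h) = f a) /\
  [/\
      (\sum_(X in [set orb H a | a in A]) f (repr X) = 1)%R,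
      (exists2 b, b \in A & forall a, a \in A -> ~ locconj G a b -> f a = 0%R),
      (forall L : {group aT},
         [min L of M | (M \subset A) && cyclic (A / M)] ->
         forall C, C \in rcosets L A ->
           (0 <= \sum_(c in C) (#|stab H c|%:Z * f c))%R),
      (forall a, a \in A ->
         (- hA A * (#|stab H a.`_(pi0 A) : stab H a|)%:R <= (f a)%:~R :> rat)%R)
    &
      (exists2 a, a \in A & (f a < 0)%R)].
End EDef.

Section Construction.
Variables (gT : finGroupType) (N Np Nq : {group gT}).
Variables (Kp Tp Kq Tq : {group {perm gT}}).
Variable alpha : coset_of Kp -> coset_of Kq.

Definition sdT := sdprod_by (aut_groupAction N).

(* Gamma = {s in T_p x T_q <= Aut N : alpha (pi_p (r_p s)) = pi_q (r_q s)},
   where T_p x T_q is identified with the automorphisms of N = N_p x N_q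
   whose restrictions r_p s, r_q s to N_p, N_q lie in T_p, T_q. *)
Definition Gamma : {set {perm gT}} :=
  [set s in Aut N | [&& restr_perm Np s \in Tp, restr_perm Nq s \in Tq &
      alpha (coset Kp (restr_perm Np s)) == coset Kq (restr_perm Nq s)]].

Definition Gsd : {set sdT} := (sdpair1 _ @* N) <*> (sdpair2 _ @* Gamma).

Definition cact (x : gT) (g : sdT) : gT :=
  invm (injm_sdpair1 (aut_groupAction N)) ((sdpair1 _ x) ^ g).

Variables (p q : nat) (fp : gT -> int) (nq : gT).
Definition eps (x : gT) : int :=
  if [pick g in Gsd | cact x.`_q g == nq] is Some g then fp (cact x.`_p g) else 0%R.
End Construction.

Arguments Gamma {gT} N Np Nq Kp Tp Kq Tq alpha.
Arguments Gsd {gT} N Np Nq Kp Tp Kq Tq alpha.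
Arguments cact {gT} N x g.
Arguments eps {gT} N Np Nq Kp Tp Kq Tq alpha p q fp nq x.

(* Main.v *)
Require Import Defs.
From HB Require Import structures.
From mathcomp Require Import all_boot all_order all_algebra all_fingroup all_solvable.
Import Order.TTheory GRing.Theory Num.Theory.
Local Open Scope group_scope.
From mathcomp Require Import zify.
Lemma orbit_sum (aT : finGroupType) (T : finGroupType) (to : {action aT &-> T})
  (H : {group aT}) (A : {set T}) (f : T -> int) :
  (forall x h, x \in A -> h \in H -> to x h \in A) ->
  (forall x h, x \in A -> h \in H -> f (to x h) = f x) ->
  ((\sum_(X in [set orbit to H a | a in A]) (f (repr X))%:~R : rat) =
   \sum_(a in A) (f a)%:~R / (#|orbit to H a|%:R))%R.
Proof.
move=> stA cf.
rewrite (partition_big_imset (fun a => orbit to H a)) /=.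
apply: eq_bigr => X /imsetP[a0 Aa0 ->].
have oeq: forall a, a \in A -> (orbit to H a == orbit to H a0) = (a \in orbit to H a0).
  move=> a Aa; apply/eqP/idP => [<-|/orbit_eqP //]; exact: orbit_refl.
have fo: forall a, a \in orbit to H a0 -> f a = f a0.
  by move=> a /orbitP[h Hh <-]; apply: cf.
have sub: orbit to H a0 \subset A by apply/subsetP=> a /orbitP[h Hh <-]; apply: stA.
rewrite (eq_bigl (fun a => a \in orbit to H a0)); last first.
  move=> a; case Aa: (a \in A) => /=; first by rewrite oeq.
  by apply/esym/negbTE; apply: contraFN Aa => /(subsetP sub).
rewrite [RHS](eq_bigr (fun _ => (f a0)%:~R / (#|orbit to H a0|%:R))%R); last first.
  move=> a Ha; rewrite fo //; congr (_ / _)%R; congr (_%:R)%R.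
  by rewrite (orbit_eqP Ha).
rewrite sumr_const -[X in _ = X]mulr_natr divfK; last first.
  by rewrite pnatr_eq0 -lt0n card_gt0; apply/set0Pn; exists a0; apply: orbit_refl.
by rewrite fo // (mem_repr a0) // orbit_refl.
Qed.

Local Open Scope ring_scope.
Lemma int_frac1 (Z : int) (m k : nat) : (0 < k)%N -> (k <= m)%N ->
  (Z%:~R : rat) = (k%:R / m%:R)%R -> Z = 1%R /\ k = m.
Proof.
move=> k0 km e.
have m0 : (m%:R : rat) != 0%R by rewrite pnatr_eq0 -lt0n; apply: leq_trans km.
have : ((Z * m%:Z)%:~R : rat) = (k%:Z)%:~R.
  by rewrite intrM e divfK // -!pmulrn.
move/intr_inj => e2.
have [Z0|[Z1|Z2]] : (Z <= 0)%R \/ Z = 1%R \/ (2 <= Z)%R by lia.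
- exfalso; lia.
- by subst; split => //; lia.
- exfalso; nia.
Qed.
Local Close Scope ring_scope.

Lemma stabE (aT T : finGroupType) (to : {action aT &-> T}) (H : {set aT}) x :
  stab to H x = 'C_H[x | to].
Proof.
apply/setP => h; rewrite inE [RHS]inE; case: (h \in H) => //=.
by apply/eqP/astab1P.
Qed.
Lemma autm1 (gT : finGroupType) (P : {group gT}) (a : {perm gT}) : a \in Aut P -> a 1 = 1.
Proof. by move=> Aa; rewrite -(autmE Aa) morph1. Qed.

Lemma Aut_constt (gT : finGroupType) (P : {group gT}) (a : {perm gT}) x pi :
  a \in Aut P -> x \in P -> a x.`_pi = (a x).`_pi.
Proof. move=> Aa Px; have := morph_constt (autm Aa) pi Px. by []. Qed.

Lemma side (gT hT : finGroupType) (P Q : {group gT}) (Kp Tp Tq : {group {perm gT}})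
  (to : {action hT &-> gT}) (G : {group hT}) (Rel : {perm gT} -> {perm gT} -> Prop)
  (fp fq : gT -> int) (np nq : gT) :
  Kp \subset Tp -> Tp \subset Aut P -> abelian Tp -> Tq \subset Aut Q ->
  isE aperm (Aut P) Kp P fp ->
  np \in P -> nq \in Q ->
  (forall x, x \in P -> x \notin orb aperm Tp np -> fp x = 0%R) ->
  (forall a b, Rel a b -> a \in Tp /\ b \in Tq) ->
  (forall a b a' b', Rel a b -> Rel a' b' -> Rel (a * a') (b * b')) ->
  (forall a b, Rel a b -> Rel a^-1 b^-1) ->
  (forall a, a \in Tp -> exists b, Rel a b) ->
  (forall k, k \in Kp -> Rel k 1) ->
  (forall a b, Rel a b^-1 -> fp (aperm np a) = fq (aperm nq b)) ->
  (forall g, g \in G -> exists a b, [/\ Rel a b, forall x, x \in P -> to x g = a x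
                                   & forall y, y \in Q -> to y g = b y]) ->
  (forall a b, Rel a b -> exists2 g, g \in G &
       (forall x, x \in P -> to x g = a x) /\ (forall y, y \in Q -> to y g = b y)) ->
  (forall x, x \in P -> x.`_(pi0 P) = x \/ x.`_(pi0 P) = 1) ->
  isE to G 'C_G[nq | to] P fp.
Proof.
move=> sKT sTA abT sTqA EK Pnp Qnq supp RelT RelM RelV RelS RelK H3 HA HB pi0P.
pose H := 'C_G[nq | to]%G.
change (isE to G H P fp).
set S := orb aperm Tp np.
have TA : forall a, a \in Tp -> a \in Aut P by move=> a /(subsetP sTA).
have TqA : forall a, a \in Tq -> a \in Aut Q by move=> a /(subsetP sTqA).
have KT : forall a, a \in Kp -> a \in Tp by move=> a /(subsetP sKT).
have autP : forall a x, a \in Aut P -> x \in P -> a x \in P.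
  by move=> a x Aa Px; apply: Aut_closed.
have Hin : forall h, h \in H -> h \in G /\ to nq h = nq.
  by move=> h; rewrite inE => /andP[-> /astab1P].
have inH : forall h, h \in G -> to nq h = nq -> h \in H.
  by move=> h Gh e; rewrite inE Gh; apply/astab1P.
have toP : forall g x, g \in G -> x \in P -> to x g \in P.
  move=> g x Gg Px; have [a [b [Rab ea _]]] := HA g Gg; rewrite ea //.
  by apply: autP => //; apply: TA; case: (RelT _ _ Rab).
have F1 : forall h, h \in H -> exists a b,
    [/\ Rel a b, b nq = nq & forall x, x \in P -> to x h = a x].
  move=> h /Hin [Gh toh]; have [a [b [Rab ea eb]]] := HA h Gh.
  by exists a, b; split => //; rewrite -eb.
have F2 : forall k, k \in Kp -> exists2 h, h \in H & forall x, x \in P -> to x h = k x.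
  move=> k Kk; have [h Gh [ea eb]] := HB _ _ (RelK k Kk).
  by exists h => //; apply: inH => //; rewrite eb // perm1.
have Sinv : forall c y, c \in Tp -> y \in S -> c y \in S.
  move=> c y Tc /imsetP[t Tt ->]; apply/imsetP; exists (t * c); first exact: groupM.
  by rewrite /aperm permM.
have SP : forall y, y \in S -> y \in P.
  by move=> y /imsetP[t Tt ->]; apply: autP; [apply: TA|].
have HG : forall h, h \in H -> h \in G by move=> h /Hin[].
have claim1 : forall t h, t \in Tp -> h \in H -> fp (to (t np) h) = fp (t np).
  move=> t h Tt Hh; have [a [b [Rab bn ea]]] := F1 h Hh.
  rewrite ea; last by apply: autP => //; apply: TA.
  have [w Rtw] := RelS t Tt.
  have e1 := H3 t w^-1; rewrite invgK in e1; have {}e1 := e1 Rtw.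
  have e2 := H3 (t * a) (w * b)^-1; rewrite invgK in e2.
  have {}e2 := e2 (RelM _ _ _ _ Rtw Rab).
  rewrite /aperm permM in e2; rewrite /aperm in e1.
  rewrite e2 e1 invMg permM; congr (fq (w^-1 _)).
  by rewrite -{1}bn permK.
have cst : forall x h, x \in P -> h \in H -> fp (to x h) = fp x.
  move=> x h Px Hh; case: (boolP (x \in S)) => [/imsetP[t Tt ->]| nS].
    exact: claim1.
  have Ptx : to x h \in P by apply: toP => //; apply: HG.
  have nS' : to x h \notin S.
    apply: contra nS => Sx.
    have [a [b [Rab _ ea]]] := F1 h^-1 (groupVr Hh).
    rewrite -(actK to h x) ea //; apply: Sinv => //; by case: (RelT _ _ Rab).
  by rewrite !supp.
have comm : forall k t x, k \in Tp -> t \in Tp -> k (t x) = t (k x).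
  by move=> k t x Tk Tt; rewrite -!permM (centsP abT t Tt k Tk).
pose mK := #|orb aperm Kp np|.
pose mH := #|orbit to H np|.
have cardK : forall t, t \in Tp -> #|orb aperm Kp (t np)| = mK.
  move=> t Tt; rewrite /mK -[RHS](card_imset _ (@perm_inj _ t)) -imset_comp.
  apply: eq_card => y; apply/imsetP/imsetP => -[k Kk ->]; exists k => //=.
    by rewrite /aperm comm //; apply: KT.
  by rewrite /aperm comm //; apply: KT.
have cardH : forall t, t \in Tp -> #|orbit to H (t np)| = mH.
  move=> t Tt; rewrite /mH -[RHS](card_imset _ (@perm_inj _ t)) -imset_comp.
  have e : forall h, h \in H -> to (t np) h = t (to np h).
    move=> h Hh; have [a [b [Rab _ ea]]] := F1 h Hh.
    rewrite !ea //; last by apply: autP => //; apply: TA.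
    by rewrite comm //; case: (RelT _ _ Rab).
  apply: eq_card => y; apply/imsetP/imsetP => -[h Hh ->]; exists h => //=.
    by rewrite e.
  by rewrite e.
have mKH : (mK <= mH)%N.
  apply: subset_leq_card; apply/subsetP => y /imsetP[k Kk ->].
  have [h Hh e] := F2 k Kk; apply/imsetP; exists h => //; rewrite e //.
have mK0 : (0 < mK)%N.
  rewrite card_gt0; apply/set0Pn; exists np; apply/imsetP; exists 1%g => //.
  by rewrite /aperm perm1.
have inS : forall a, a \in P -> fp a != 0%R -> a \in S.
  by move=> a Pa nz; apply/negPn; apply: contra nz => nS; rewrite supp.
have [cK [IK IIK IIIK IVK VK]] := EK.
have sP : (\sum_(a in P) (fp a)%:~R = mK%:R :> rat)%R.
  have := congr1 (fun z : int => (z%:~R : rat)) IK.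
  rewrite rmorph_sum /=.
  rewrite (@orbit_sum _ _ 'P%act Kp P fp); last 2 first.
  - by move=> x h Px Kh; apply: autP => //; apply: TA; apply: KT.
  - by move=> x h Px Kh; apply: cK.
  have mK0' : (mK%:R : rat) != 0%R by rewrite pnatr_eq0 -lt0n.
  have e2 : (\sum_(a in P) (fp a)%:~R / (#|orbit 'P Kp a|%:R) =
             \sum_(a in P) (fp a)%:~R / mK%:R :> rat)%R.
    apply: eq_bigr => a Pa; case: (eqVneq (fp a) 0%R) => [->|nz].
      by rewrite !mul0r.
    have /imsetP[t Tt ->] := inS a Pa nz.
    by rewrite -(cardK t Tt).
  rewrite e2 -mulr_suml => e.
  by rewrite -(divfK mK0' (\sum_(a in P) _)%R) e mul1r.
have [IH emHK] : (\sum_(X in [set orb to H a | a in P]) fp (repr X) = 1)%R /\ mK = mH.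
  apply: (@int_frac1 _ mH mK mK0 mKH).
  rewrite rmorph_sum /= (@orbit_sum _ _ to H P fp); last 2 first.
  - by move=> x h Px Hh; apply: toP => //; apply: HG.
  - by move=> x h Px Hh; apply: cst.
  rewrite -sP mulr_suml; apply: eq_bigr => a Pa; case: (eqVneq (fp a) 0%R) => [->|nz].
    by rewrite !mul0r.
  have /imsetP[t Tt ->] := inS a Pa nz.
  by rewrite -(cardH t Tt).
split; first exact: cst.
split.
- exact: IH.
- exists np => // a Pa nlc; case: (eqVneq (fp a) 0%R) => // nz; exfalso; apply: nlc.
  have /imsetP[t Tt ea] := inS a Pa nz.
  have [w Rw] := RelS t^-1 (groupVr Tt).
  have [g Gg [eg _]] := HB _ _ Rw.
  have gnp : to a g = np by rewrite eg // ea /aperm permK.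
  move=> r _; exists g => //.
  have [a' [b' [Rab ea' _]]] := HA g Gg.
  have Aa' : a' \in Aut P by apply: TA; case: (RelT _ _ Rab).
  have Par : a.`_r \in P.
    by apply: (subsetP (_ : <[a]> \subset P)); [rewrite cycle_subG | apply: cycle_constt].
  by rewrite ea' // (@Aut_constt _ _ _ _ r Aa' Pa) -ea' // gnp.
- move=> L minL C CL.
  have /andP[sLP _] := mingroupp minL.
  have sCP : C \subset P.
    case/rcosetsP: CL => x Px ->; apply/subsetP => c /rcosetP[l Ll ->].
    by rewrite groupM // (subsetP sLP).
  have key : forall c, c \in C -> (#|Kp|%:Z * (#|stab to H c|%:Z * fp c) =
                                   #|H|%:Z * (#|stab aperm Kp c|%:Z * fp c))%R.
    move=> c Cc; have Pc := subsetP sCP c Cc.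
    case: (eqVneq (fp c) 0%R) => [->|nz]; first by rewrite !mulr0.
    have /imsetP[t Tt ec] := inS c Pc nz.
    have eH := card_orbit_stab to H c; have eK := card_orbit_stab 'P Kp c.
    rewrite -stabE in eH; rewrite -stabE in eK.
    have cH : #|orbit to H c| = mH by rewrite ec; apply: cardH.
    have cK' : #|orbit 'P Kp c| = mK by rewrite ec -(cardK t Tt).
    rewrite cH in eH; rewrite cK' in eK.
    rewrite !mulrA -!PoszM; congr (Posz _ * _)%R.
    by rewrite -eH -eK emHK mulnAC.
  have h0 := IIIK L minL C CL; have Kpos : (0 < #|Kp|%:Z)%R by rewrite ltz_nat cardG_gt0.
  have e : (#|Kp|%:Z * (\sum_(c in C) #|stab to H c|%:Z * fp c) =
            #|H|%:Z * (\sum_(c in C) #|stab aperm Kp c|%:Z * fp c))%R.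
    by rewrite !mulr_sumr; apply: eq_bigr.
  by rewrite -(pmulr_rge0 _ Kpos) e; apply: mulr_ge0.
- move=> a Pa; have := IVK a Pa; rewrite !stabE.
  case: (eqVneq (fp a) 0%R) => [->|nz].
    rewrite !mulNr !oppr_le0 => hK; rewrite mulr_ge0 //; first by rewrite pmulr_lge0 // ltr0n indexg_gt0 in hK.
  have /imsetP[t Tt ea] := inS a Pa nz.
  case: (pi0P a Pa) => ->; first by rewrite !indexgg.
  have C1H : 'C_H[1 | to] = H.
    apply/setIidPl/subsetP => h Hh; apply/astab1P.
    have [a' [b' [Rab _ ea']]] := F1 h Hh; rewrite ea' //; apply: (@autm1 _ P).
    by apply: TA; case: (RelT _ _ Rab).
  have C1K : 'C_Kp[1 | 'P] = Kp.
    apply/setIidPl/subsetP => k Kk; apply/astab1P => /=.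
    by apply: (@autm1 _ P); apply: TA; apply: KT.
  have cK' : #|orbit 'P Kp (aperm np t)| = mK by exact: cardK.
  by rewrite C1H C1K -!card_orbit ea cardH // cK' emHK.
- exact: VK.
Qed.
Lemma isE_transfer (aT hT : finGroupType) (act1 act2 : aT -> hT -> aT)
  (G H1 H2 : {set hT}) (A : {group aT}) (f : aT -> int) :
  (forall a h, a \in A -> act1 a h = act2 a h) -> H1 = H2 ->
  isE act1 G H1 A f -> isE act2 G H2 A f.
Proof.
move=> e <- [cc [I II III IV V]].
have orbE : forall a, a \in A -> orb act1 H1 a = orb act2 H1 a.
  by move=> a Aa; apply/setP => y; apply/imsetP/imsetP => -[h Hh ->]; exists h; rewrite ?e.
have stE : forall a, a \in A -> stab act1 H1 a = stab act2 H1 a.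
  by move=> a Aa; apply/setP => h; rewrite !inE e.
have cA : forall a (pi : nat_pred), a \in A -> a.`_pi \in A.
  move=> a pi Aa; apply: (subsetP (_ : <[a]> \subset A)); last exact: cycle_constt.
  by rewrite cycle_subG.
split; first by move=> a h Aa Hh; rewrite -e //; apply: cc.
split => //.
- rewrite -I; apply: eq_bigl => X.
  by apply/imsetP/imsetP => -[a Aa ->]; exists a; rewrite ?orbE.
- have [b Ab hb] := II; exists b => // a Aa nl; apply: hb => // l; apply: nl => r pr.
  by have [g Gg eg] := l r pr; exists g; rewrite -?e ?cA.
- move=> L mL C CL; have := III L mL C CL.
  have /andP[sLA _] := mingroupp mL.
  have sCA : C \subset A.
    case/rcosetsP: CL => x Ax ->; apply/subsetP => c /rcosetP[l Ll ->].
    by rewrite groupM // (subsetP sLA).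
  move=> h0; rewrite (eq_bigr (fun c => (#|stab act1 H1 c|%:Z * f c)%R)) // => c Cc.
  by rewrite stE // (subsetP sCA).
- by move=> a Aa; rewrite -!stE ?cA //; apply: IV.
Qed.

Lemma pelt_constt (gT : finGroupType) (p : nat) (pi : nat_pred) (x : gT) :
  p.-elt x -> x.`_pi = x \/ x.`_pi = 1.
Proof.
move=> px; case: (boolP (p \in pi)) => pip.
  by left; apply: constt_p_elt; apply: sub_p_elt px => r; rewrite inE => /eqP ->.
right; apply/constt1P; apply: sub_p_elt px => r; rewrite inE => /eqP ->.
by rewrite inE.
Qed.

Lemma autactE (gT : finGroupType) (N : {group gT}) x s :
  s \in Aut N -> (aut_groupAction N) x s = s x.
Proof. by move=> As; rewrite /= /autact /= apermE. Qed.

Section Act.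
Variables (gT : finGroupType) (N : {group gT}).
Local Notation s1 := (sdpair1 (aut_groupAction N)).
Local Notation s2 := (sdpair2 (aut_groupAction N)).

Lemma s1_norm (g : sdT N) : g \in 'N(s1 @* N).
Proof.
have [nK _ _ _ _] := sdprod_context (sdprod_sdpair (aut_groupAction N)).
by apply: (subsetP (normal_norm nK)); rewrite inE.
Qed.

Lemma cact_in x (g : sdT N) : x \in N ->
  cact N x g \in N /\ s1 (cact N x g) = s1 x ^ g.
Proof.
move=> Nx; have : s1 x ^ g \in s1 @* N by rewrite memJ_norm ?s1_norm ?mem_morphim.
case/morphimP => z _ Nz e; rewrite /cact e invmE //.
Qed.

Definition tact (x : gT) (g : sdT N) : gT := if x \in N then cact N x g else x.

Lemma tact_is_action : is_action [set: sdT N] tact.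
Proof.
split.
  move=> g x y; rewrite /tact.
  case Nx: (x \in N); case Ny: (y \in N) => //.
  - move=> e; have [_ ex] := cact_in _ g Nx; have [_ ey] := cact_in _ g Ny.
    have : s1 x ^ g = s1 y ^ g by rewrite -ex -ey e.
    by move/conjg_inj/(injmP (injm_sdpair1 (aut_groupAction N))); apply.
  - by move=> e; have [Nc _] := cact_in _ g Nx; rewrite e Ny in Nc.
  - by move=> e; have [Nc _] := cact_in _ g Ny; rewrite -e Nx in Nc.
move=> x a b _ _; rewrite /tact; case Nx: (x \in N); last by rewrite Nx.
have [Na ea] := cact_in _ a Nx; rewrite Na.
have [Nab eab] := cact_in _ (a * b) Nx; have [Nb eb] := cact_in _ b Na.
apply: (injmP (injm_sdpair1 (aut_groupAction N)) _ _ Nab Nb).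
by rewrite /= eab eb ea conjgM.
Qed.

Definition tactA := Action tact_is_action.

Lemma tactE x g : x \in N -> tactA x g = cact N x g.
Proof. by move=> Nx; rewrite /= /tact Nx. Qed.

Lemma tact_in x g : x \in N -> tactA x g \in N.
Proof. by move=> Nx; rewrite tactE //; case: (cact_in _ g Nx). Qed.

Lemma tact_s1 x n : abelian N -> x \in N -> n \in N -> tactA x (s1 n) = x.
Proof.
move=> aN Nx Nn; have [Nc e] := cact_in _ (s1 n) Nx.
rewrite tactE //; apply: (injmP (injm_sdpair1 (aut_groupAction N)) _ _ Nc Nx).
rewrite /= e -morphJ //; congr (s1 _).
by rewrite /conjg (centsP aN x Nx n Nn) mulKg.
Qed.

Lemma tact_s2 x s : s \in Aut N -> x \in N -> tactA x (s2 s) = s x.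
Proof.
move=> As Nx; have [Nc e] := cact_in _ (s2 s) Nx.
rewrite tactE //; apply: (injmP (injm_sdpair1 (aut_groupAction N)) _ _ Nc (Aut_closed As Nx)).
by rewrite /= e -sdpair_act // autactE.
Qed.
End Act.

Section Main.
Variables (gT : finGroupType) (p q : nat) (Np Nq N : {group gT})
  (Kp Tp Kq Tq : {group {perm gT}}) (alpha : {morphism (Tp / Kp)%g >-> coset_of Kq}).
Hypotheses (pp : prime p) (pq : prime q) (npq : p != q)
  (eP : p.-abelem Np) (eQ : q.-abelem Nq) (dN : Np \x Nq = N)
  (sKTp : Kp \subset Tp) (sTAp : Tp \subset Aut Np) (abTp : abelian Tp)
  (sKTq : Kq \subset Tq) (sTAq : Tq \subset Aut Nq) (abTq : abelian Tq)
  (iso : isom (Tp / Kp) (Tq / Kq) alpha).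

Let gp : p.-group Np := abelem_pgroup eP.
Let gq : q.-group Nq := abelem_pgroup eQ.
Let aP : abelian Np := abelem_abelian eP.
Let aQ : abelian Nq := abelem_abelian eQ.

Lemma qelt_p'elt (x : gT) : q.-elt x -> p^'.-elt x.
Proof.
by apply: sub_p_elt => r; rewrite !inE => /eqP ->; rewrite eq_sym.
Qed.
Lemma pelt_q'elt (x : gT) : p.-elt x -> q^'.-elt x.
Proof.
by apply: sub_p_elt => r; rewrite !inE => /eqP ->.
Qed.

Lemma cNpNq : Np \subset 'C(Nq).
Proof. by case/dprodP: dN => _ _ cQP _; rewrite centsC. Qed.

Lemma dec_p x : x \in Np -> x.`_p = x /\ x.`_q = 1.
Proof.
move=> Px; have px := mem_p_elt gp Px; split; first exact: constt_p_elt.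
by apply/constt1P; apply: pelt_q'elt.
Qed.
Lemma dec_q x : x \in Nq -> x.`_q = x /\ x.`_p = 1.
Proof.
move=> Qx; have qx := mem_p_elt gq Qx; split; first exact: constt_p_elt.
by apply/constt1P; apply: qelt_p'elt.
Qed.

Lemma pq_parts u v : u \in Np -> v \in Nq -> (u * v).`_p = u /\ (u * v).`_q = v.
Proof.
move=> Pu Qv; have c : commute u v by apply: (centsP cNpNq).
have [up uq] := dec_p _ Pu; have [vq vp] := dec_q _ Qv.
by rewrite !consttM // up uq vq vp mulg1 mul1g.
Qed.

Lemma dec_N x : x \in N -> [/\ x.`_p \in Np, x.`_q \in Nq & x = x.`_p * x.`_q].
Proof.
move=> Nx; have [y [z [Py Qz -> _]]] := mem_dprod dN Nx.
by have [-> ->] := pq_parts _ _ Py Qz.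
Qed.

Lemma NpN : Np \subset N.
Proof. by case/dprodP: dN => _ <- _ _; apply: mulG_subl. Qed.
Lemma NqN : Nq \subset N.
Proof. by case/dprodP: dN => _ <- _ _; apply: mulG_subr. Qed.

Lemma abN : abelian N.
Proof. by case/dprodP: dN => _ <- cQP _; rewrite abelianM aP aQ cQP. Qed.

Lemma pelt_N x : x \in N -> p.-elt x -> x \in Np.
Proof.
move=> Nx px; have [Pxp _ _] := dec_N _ Nx.
by rewrite -(constt_p_elt px).
Qed.
Lemma qelt_N x : x \in N -> q.-elt x -> x \in Nq.
Proof.
move=> Nx qx; have [_ Qxq _] := dec_N _ Nx.
by rewrite -(constt_p_elt qx).
Qed.

Lemma Aut_Np s x : s \in Aut N -> x \in Np -> s x \in Np.
Proof.
move=> As Px; have Nx := subsetP NpN x Px.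
apply: pelt_N; first exact: Aut_closed.
by have := morph_p_elt (autm As) Nx (mem_p_elt gp Px).
Qed.
Lemma Aut_Nq s x : s \in Aut N -> x \in Nq -> s x \in Nq.
Proof.
move=> As Qx; have Nx := subsetP NqN x Qx.
apply: qelt_N; first exact: Aut_closed.
by have := morph_p_elt (autm As) Nx (mem_p_elt gq Qx).
Qed.

Lemma Aut_normNp s : s \in Aut N -> s \in 'N(Np | 'P).
Proof.
move=> As; apply/astabsP => x /=; apply/idP/idP => [|]; last exact: Aut_Np.
move=> Psx; rewrite -(permK s x); apply: Aut_Np => //.
by rewrite groupV.
Qed.
Lemma Aut_normNq s : s \in Aut N -> s \in 'N(Nq | 'P).
Proof.
move=> As; apply/astabsP => x /=; apply/idP/idP => [|]; last exact: Aut_Nq.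
move=> Qsx; rewrite -(permK s x); apply: Aut_Nq => //.
by rewrite groupV.
Qed.

Definition Rel (a b : {perm gT}) : Prop :=
  [/\ a \in Tp, b \in Tq & alpha (coset Kp a) = coset Kq b].

Let nKTp : Tp \subset 'N(Kp) := sub_abelian_norm abTp sKTp.
Let nKTq : Tq \subset 'N(Kq) := sub_abelian_norm abTq sKTq.

Lemma RelM a b a' b' : Rel a b -> Rel a' b' -> Rel (a * a') (b * b').
Proof.
case=> Ta Tb e [Ta' Tb' e']; split; rewrite ?groupM //.
by rewrite !morphM ?(subsetP nKTp) ?(subsetP nKTq) ?mem_quotient // e e'.
Qed.

Lemma RelV a b : Rel a b -> Rel a^-1 b^-1.
Proof.
case=> Ta Tb e; split; rewrite ?groupV //.
by rewrite !morphV ?(subsetP nKTp) ?(subsetP nKTq) ?mem_quotient // e.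
Qed.

Lemma Rel1 : Rel 1 1.
Proof. by split; rewrite ?group1 // !morph1. Qed.

Lemma RelKp k : k \in Kp -> Rel k 1.
Proof.
move=> Kk; split; rewrite ?group1 ?(subsetP sKTp) //.
by rewrite (coset_id Kk) !morph1.
Qed.
Lemma RelKq k : k \in Kq -> Rel 1 k.
Proof.
move=> Kk; split; rewrite ?group1 ?(subsetP sKTq) //.
by rewrite (coset_id Kk) !morph1.
Qed.

Lemma RelSp a : a \in Tp -> exists b, Rel a b.
Proof.
move=> Ta; have [_ im] := isomP iso.
have : alpha (coset Kp a) \in Tq / Kq by rewrite -im mem_morphim ?mem_quotient.
case/morphimP => b _ Tb e; exists b; split => //.
Qed.
Lemma RelSq b : b \in Tq -> exists a, Rel a b.
Proof.
move=> Tb; have [_ im] := isomP iso.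
have : coset Kq b \in alpha @* (Tp / Kp) by rewrite im mem_quotient.
case/morphimP => c _ /morphimP[a _ Ta ->] e; exists a; split => //.
Qed.

Local Notation s1 := (sdpair1 (aut_groupAction N)).
Local Notation s2 := (sdpair2 (aut_groupAction N)).
Local Notation Gam := (Gamma N Np Nq Kp Tp Kq Tq alpha).
Definition GG : {group sdT N} := joing_group (s1 @* N) (s2 @* Gam).
Local Notation to := (tactA gT N).

Definition good (g : sdT N) := exists a b, [/\ Rel a b,
  forall x, x \in Np -> to x g = a x & forall y, y \in Nq -> to y g = b y].

Lemma good1 : good 1.
Proof. by exists 1, 1; split; [exact: Rel1 | move=> x _; rewrite act1 perm1 ..]. Qed.

Lemma goodM g h : good g -> good h -> good (g * h).
Proof.
move=> [a [b [Rab ea eb]]] [a' [b' [Rab' ea' eb']]].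
have [Ta Tb _] := Rab.
exists (a * a'), (b * b'); split; first exact: RelM.
  move=> x Px; rewrite actM ea // ea' ?permM //.
  by apply: Aut_closed Px; apply: (subsetP sTAp).
move=> y Qy; rewrite actM eb // eb' ?permM //.
by apply: Aut_closed Qy; apply: (subsetP sTAq).
Qed.

Lemma goodA g : g \in GG -> good g.
Proof.
case/gen_prodgP => n [c Ac ->].
elim: n c Ac => [|n IH] c Ac; first by rewrite big_ord0; exact: good1.
rewrite big_ord_recr /=; apply: goodM; first by apply: IH => i; apply: Ac.
have := Ac ord_max; rewrite inE => /orP[/morphimP[m _ Nm ->]|/morphimP[s As Gs ->]].
  exists 1, 1; split; first exact: Rel1.
    by move=> x Px; rewrite perm1 (@tact_s1 _ N) ?abN // (subsetP NpN).
  by move=> x Qx; rewrite perm1 (@tact_s1 _ N) ?abN // (subsetP NqN).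
move: Gs; rewrite inE => /andP[_ /and3P[Tr Tr' /eqP e]].
exists (restr_perm Np s), (restr_perm Nq s); split => //.
  move=> x Px; rewrite (@tact_s2 _ N) ?(subsetP NpN) // restr_permE //.
  exact: Aut_normNp.
move=> x Qx; rewrite (@tact_s2 _ N) ?(subsetP NqN) // restr_permE //.
exact: Aut_normNq.
Qed.

Lemma goodB a b : Rel a b -> exists2 g, g \in GG &
  (forall x, x \in Np -> to x g = a x) /\ (forall y, y \in Nq -> to y g = b y).
Proof.
case=> Ta Tb e.
have Aa : a \in Aut Np by apply: (subsetP sTAp).
have Ab : b \in Aut Nq by apply: (subsetP sTAq).
pose F x := if x \in N then a x.`_p * b x.`_q else x.
have FN : forall x, x \in N -> F x \in N.
  move=> x Nx; have [Pp Qq _] := dec_N _ Nx; rewrite /F Nx groupM //.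
    by apply: (subsetP NpN); apply: Aut_closed Pp.
  by apply: (subsetP NqN); apply: Aut_closed Qq.
have Fparts : forall x, x \in N -> (F x).`_p = a x.`_p /\ (F x).`_q = b x.`_q.
  move=> x Nx; have [Pp Qq _] := dec_N _ Nx; rewrite /F Nx.
  by apply: pq_parts; apply: Aut_closed.
have injF : injective F.
  move=> x y.
  case Nx: (x \in N); case Ny: (y \in N).
  - move=> exy; have [Pp Qq ex] := dec_N _ Nx; have [Pp' Qq' ey] := dec_N _ Ny.
    have [e1 e2] := Fparts x Nx; have [e3 e4] := Fparts y Ny.
    rewrite ex ey; congr (_ * _); first by apply: (@perm_inj _ a); rewrite -e1 -e3 exy.
    by apply: (@perm_inj _ b); rewrite -e2 -e4 exy.
  - by move=> exy; have := FN x Nx; rewrite exy /F Ny /= Ny.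
  - by move=> exy; have := FN y Ny; rewrite -exy /F Nx /= Nx.
  - by rewrite /F Nx Ny.
pose s := perm injF.
have sE : forall x, x \in N -> s x = a x.`_p * b x.`_q by move=> x Nx; rewrite permE /F Nx.
have As : s \in Aut N.
  rewrite inE; apply/andP; split.
    apply/subsetP => x; rewrite inE permE /F; case: ifP => // _.
    by rewrite eqxx.
  apply/morphicP => x y Nx Ny; rewrite !sE ?groupM //.
  have cxy : commute x y by apply: (centsP abN).
  have [Px Qx _] := dec_N _ Nx; have [Py Qy _] := dec_N _ Ny.
  rewrite !consttM // (morphicP (Aut_morphic Aa)) // (morphicP (Aut_morphic Ab)) //.
  rewrite -!mulgA; congr (_ * _); rewrite !mulgA; congr (_ * _).
  apply: (centsP abN).
    by apply: (subsetP NpN); apply: (Aut_closed Aa).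
  by apply: (subsetP NqN); apply: (Aut_closed Ab).
have sP : restr_perm Np s = a.
  apply/permP => x; case: (boolP (x \in Np)) => Px.
    rewrite restr_permE ?Aut_normNp // sE ?(subsetP NpN) //.
    have [-> ->] := dec_p _ Px; by rewrite (autm1 _ _ _ Ab) mulg1.
  by rewrite (out_perm (restr_perm_on _ _) Px) (out_Aut Aa Px).
have sQ : restr_perm Nq s = b.
  apply/permP => x; case: (boolP (x \in Nq)) => Qx.
    rewrite restr_permE ?Aut_normNq // sE ?(subsetP NqN) //.
    have [-> ->] := dec_q _ Qx; by rewrite (autm1 _ _ _ Aa) mul1g.
  by rewrite (out_perm (restr_perm_on _ _) Qx) (out_Aut Ab Qx).
have Gs : s \in Gam by rewrite inE As sP sQ Ta Tb e eqxx.
exists (s2 s).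
  by apply: mem_gen; rewrite inE; apply/orP; right; apply: mem_morphim.
split => x Px.
  by rewrite (@tact_s2 _ N) ?(subsetP NpN) // -sP restr_permE ?Aut_normNp.
by rewrite (@tact_s2 _ N) ?(subsetP NqN) // -sQ restr_permE ?Aut_normNq.
Qed.


Lemma to_Np g y : g \in GG -> y \in Np -> to y g \in Np.
Proof.
move=> Gg Py; have [a [b [[Ta _ _] ea _]]] := goodA g Gg.
by rewrite ea //; apply: Aut_closed Py; apply: (subsetP sTAp).
Qed.
Lemma to_Nq g y : g \in GG -> y \in Nq -> to y g \in Nq.
Proof.
move=> Gg Qy; have [a [b [[_ Tb _] _ eb]]] := goodA g Gg.
by rewrite eb //; apply: Aut_closed Qy; apply: (subsetP sTAq).
Qed.

Lemma CE x : x \in N -> 'C_GG[x | to] = 'C_GG[s1 x].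
Proof.
move=> Nx; apply/setP => h; rewrite in_setI [in RHS]in_setI; congr (_ && _).
have [Nc ec] := cact_in _ _ _ h Nx.
rewrite -astab1J; apply/astab1P/astab1P => /= e.
  rewrite -ec; congr (s1 _); have := e; rewrite /tact Nx; exact.
rewrite /tact Nx.
by apply: (injmP (injm_sdpair1 (aut_groupAction N)) _ _ Nc Nx); rewrite /= ec e.
Qed.

Variables (fp fq : gT -> int) (np nq : gT).
Hypotheses (EP : isE aperm (Aut Np) Kp Np fp) (EQ : isE aperm (Aut Nq) Kq Nq fq)
  (Pnp : np \in Np) (Qnq : nq \in Nq)
  (suppP : forall x, x \in Np -> x \notin orb aperm Tp np -> fp x = 0%R)
  (suppQ : forall x, x \in Nq -> x \notin orb aperm Tq nq -> fq x = 0%R)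
  (h3 : forall a b, a \in Tp -> b \in Tq ->
     coset Kq b = alpha (coset Kp a^-1)%g -> fp (aperm np a) = fq (aperm nq b)).

Lemma H3p a b : Rel a b^-1 -> fp (aperm np a) = fq (aperm nq b).
Proof.
move=> R; have [Ta Tb' _] := R; have := RelV _ _ R; rewrite invgK => -[_ Tb e].
by apply: h3 => //; rewrite e.
Qed.
Lemma H3q b a : Rel a^-1 b -> fq (aperm nq b) = fp (aperm np a).
Proof.
move=> [Ta' Tb e]; symmetry; apply: h3; rewrite ?e //.
by rewrite -(invgK a) groupV.
Qed.

Lemma sideP : isE to GG 'C_GG[nq | to] Np fp.
Proof.
apply: (@side gT (sdT N) Np Nq Kp Tp Tq to GG Rel fp fq np nq sKTp sTAp abTp sTAq EP Pnp Qnq suppP) => //.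
- by move=> a b [].
- exact: RelM.
- exact: RelV.
- exact: RelSp.
- exact: RelKp.
- exact: H3p.
- exact: goodA.
- exact: goodB.
- by move=> x Px; apply: (@pelt_constt _ p); apply: mem_p_elt gp Px.
Qed.

Lemma sideQ : isE to GG 'C_GG[np | to] Nq fq.
Proof.
apply: (@side gT (sdT N) Nq Np Kq Tq Tp to GG (fun b a => Rel a b) fq fp nq np sKTq sTAq abTq sTAp EQ Qnq Pnp suppQ) => //.
- by move=> b a [].
- by move=> b a b' a' R R'; apply: RelM.
- by move=> b a R; apply: RelV.
- exact: RelSq.
- exact: RelKq.
- exact: H3q.
- by move=> g Gg; have [a [b [R ea eb]]] := goodA g Gg; exists b, a; split.
- by move=> b a R; have [g Gg [ea eb]] := goodB a b R; exists g.
- by move=> x Qx; apply: (@pelt_constt _ q); apply: mem_p_elt gq Qx.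
Qed.

Lemma GGE : Gsd N Np Nq Kp Tp Kq Tq alpha = GG.
Proof. by []. Qed.

Lemma cstP y h : y \in Np -> h \in 'C_GG[nq | to] -> fp (to y h) = fp y.
Proof. by have [c _] := sideP; apply: c. Qed.

Lemma main_sec :
  let G := Gsd N Np Nq Kp Tp Kq Tq alpha in
  let act := cact N in
  let epsilon := eps N Np Nq Kp Tp Kq Tq alpha p q fp nq in
  [/\ (forall x g, x \in N -> g \in G -> act x.`_q g = nq ->
         epsilon x = fp (act x.`_p g)),
      isE act G ('C_G[sdpair1 _ nq])%g Np fp,
      isE act G ('C_G[sdpair1 _ np])%g Nq fq,
      (forall x, x \in N -> x.`_p \notin orb act G np -> epsilon x = 0%R)
    & (forall x g, x \in N -> g \in G -> act x.`_p g = np ->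
         epsilon x = fq (act x.`_q g))].
Proof.
move=> G act epsilon; rewrite /G GGE /act /epsilon.
have NP : forall y, y \in Np -> y \in N by move=> y /(subsetP NpN).
have NQ : forall y, y \in Nq -> y \in N by move=> y /(subsetP NqN).
split.
- move=> x g Nx Gg e; have [Pxp Qxq _] := dec_N _ Nx.
  rewrite -tactE ?NQ // in e; rewrite -tactE ?NP //.
  rewrite /eps; case: pickP => [g' /andP[Gg' /eqP e'] | none]; last first.
    by have := none g; rewrite Gg -tactE ?NQ // e eqxx.
  rewrite -tactE ?NQ // in e'; rewrite -tactE ?NP //.
  have Gh : g'^-1 * g \in GG by rewrite groupM ?groupV.
  have eg : g = g' * (g'^-1 * g) by rewrite mulKVg.
  rewrite eg actM [RHS]cstP //; first exact: to_Np.
  by rewrite inE Gh; apply/astab1P; rewrite -{1}e' -actM -eg.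
- apply: (@isE_transfer _ _ to); first by move=> a h Pa; rewrite tactE ?NP.
    by apply: CE; apply: NQ.
  exact: sideP.
- apply: (@isE_transfer _ _ to); first by move=> a h Qa; rewrite tactE ?NQ.
    by apply: CE; apply: NP.
  exact: sideQ.
- move=> x Nx nin; have [Pxp Qxq _] := dec_N _ Nx.
  rewrite /eps; case: pickP => [g' /andP[Gg' /eqP e'] | //].
  rewrite -tactE ?NP //; apply: suppP; first exact: to_Np.
  apply: contra nin => /imsetP[t Tt ey].
  have [b Rtb] := RelSp t Tt; have [g'' Gg'' [eg'' _]] := goodB t b Rtb.
  apply/imsetP; exists (g'' * g'^-1); first by rewrite groupM ?groupV.
  by rewrite -tactE ?NP // actM eg'' // -[t np]/(aperm np t) -ey actK.
- move=> x g Nx Gg e; have [Pxp Qxq _] := dec_N _ Nx.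
  rewrite -tactE ?NP // in e; rewrite -tactE ?NQ //.
  have Qu : to x.`_q g \in Nq by apply: to_Nq.
  rewrite /eps; case: pickP => [g' /andP[Gg' /eqP e'] | none].
    rewrite -tactE ?NQ // in e'; rewrite -tactE ?NP //.
    have Gh : g^-1 * g' \in GG by rewrite groupM ?groupV.
    have eg' : g' = g * (g^-1 * g') by rewrite mulKVg.
    have [a [b [Rab ea eb]]] := goodA _ Gh.
    have e1 : to x.`_p g' = a np by rewrite eg' actM e ea.
    have e2 : b (to x.`_q g) = nq by rewrite -eb // -actM -eg' e'.
    have e3 : to x.`_q g = b^-1 nq by rewrite -e2 permK.
    rewrite e1 e3.
    have := H3p a b^-1; rewrite invgK => /(_ Rab); exact.
  symmetry; apply: suppQ => //; apply/negP => /imsetP[t Tt eu].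
  have [a Rat] := RelSq _ (groupVr Tt); have [g'' Gg'' [_ eg'']] := goodB _ _ Rat.
  have := none (g * g''); rewrite GGE groupM // -tactE ?NQ // actM eu eg'' //.
    by rewrite /aperm permK eqxx.
  by rewrite -[aperm nq t]/(t nq); apply: Aut_closed Qnq; apply: (subsetP sTAq).
Qed.

End Main.
Theorem mainTheorem12 (gT : finGroupType) (p q : nat) (Np Nq N : {group gT})
  (Kp Tp Kq Tq : {group {perm gT}}) (fp fq : gT -> int) (np nq : gT)
  (alpha : {morphism (Tp / Kp)%g >-> coset_of Kq}) :
  prime p -> prime q -> p != q ->
  p.-abelem Np -> #|Np| = (p ^ 2)%N ->
  q.-abelem Nq -> #|Nq| = (q ^ 2)%N ->
  (Np \x Nq)%g = N ->
  Kp \subset Tp -> Tp \subset Aut Np -> abelian Tp ->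
  Kq \subset Tq -> Tq \subset Aut Nq -> abelian Tq ->
  isE aperm (Aut Np) Kp Np fp ->
  isE aperm (Aut Nq) Kq Nq fq ->
  (* (1) *)
  np \in Np -> nq \in Nq -> fp np = fq nq -> fp np != 0%R ->
  (* (2) *)
  (forall x, x \in Np -> x \notin orb aperm Tp np -> fp x = 0%R) ->
  (forall x, x \in Nq -> x \notin orb aperm Tq nq -> fq x = 0%R) ->
  (* (3) *)
  isom (Tp / Kp)%g (Tq / Kq)%g alpha ->
  (forall a b, a \in Tp -> b \in Tq ->
     coset Kq b = alpha (coset Kp a^-1)%g -> fp (aperm np a) = fq (aperm nq b)) ->
  let G := Gsd N Np Nq Kp Tp Kq Tq alpha in
  let act := cact N in
  let epsilon := eps N Np Nq Kp Tp Kq Tq alpha p q fp nq in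
  [/\ (* epsilon is well defined *)
      (forall x g, x \in N -> g \in G -> act x.`_q g = nq ->
         epsilon x = fp (act x.`_p g)),
      isE act G ('C_G[sdpair1 _ nq])%g Np fp,
      isE act G ('C_G[sdpair1 _ np])%g Nq fq,
      (forall x, x \in N -> x.`_p \notin orb act G np -> epsilon x = 0%R)
    & (forall x g, x \in N -> g \in G -> act x.`_p g = np ->
         epsilon x = fq (act x.`_q g))].

Proof.
move=> pp pq npq eP cP eQ cQ dN sKTp sTAp abTp sKTq sTAq abTq EP EQ Pnp Qnq _ _
  suppP suppQ iso h3.
by apply: main_sec.
Qed.
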